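(* Let $M=(E,\mathcal{I})$ be a matroid and consider the matroid game with a diagonal loss matrix $L$ with $L_{e,e}>0$ for all $e\in E$. If this game has a symmetric Nash equilibrium $(x,x)$, then $x$ is the unique lexicographically optimal point of $B(M)$ with respect to the weight vector $w(e)=1/L_{e,e}$ ($e\in E$).
   Context: $B(M)=\{x\ge0: x(S)\le r(S)\ \forall S\subseteq E,\ x(E)=r(E)\}$ with $r$ the rank function. In the matroid game, the row player chooses $x\in B(M)$ minimizing $x^TLy$ and the column player chooses $y\in B(M)$ maximizing it; $(x,x)$ is a symmetric Nash equilibrium if $x^TLz\le x^TLx\le z^TLx$ for all $z\in B(M)$. For a positive weight vector $w$, $x\in B(M)$ is lexicographically optimal if the $|E|$-tuple $(x(e)/w(e))_{e\in E}$ sorted in increasing order is lexicographically maximum among all such sorted tuples $(y(e)/w(e))_{e\in E}$ for $y\in B(M)$. *)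

(* Defs.v *)
From HB Require Import structures.
From mathcomp Require Import all_boot all_order all_algebra.
Set Implicit Arguments. Unset Strict Implicit. Unset Printing Implicit Defensive.
Import Order.TTheory GRing.Theory Num.Theory.
Local Open Scope ring_scope.

Definition is_matroid (E : finType) (indep : {set {set E}}) : Prop :=
  [/\ set0 \in indep,
      (forall I J : {set E}, J \in indep -> I \subset J -> I \in indep) &
      (forall I J : {set E}, I \in indep -> J \in indep -> #|I| < #|J| ->
         exists2 e, e \in J :\: I & e |: I \in indep)]%N.

Definition mrank (E : finType) (indep : {set {set E}}) (S : {set E}) : nat :=
  \max_(I in indep | I \subset S) #|I|.

Definition in_base_polytope (R : realFieldType) (E : finType)
    (indep : {set {set E}}) (x : E -> R) : Prop :=
  [/\ forall e, 0 <= x e,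
      forall S : {set E}, \sum_(e in S) x e <= (mrank indep S)%:R &
      \sum_(e in [set: E]) x e = (mrank indep [set: E])%:R].

Definition bilin (R : realFieldType) (E : finType) (L : E -> E -> R)
    (x y : E -> R) : R :=
  \sum_(e : E) \sum_(f : E) x e * L e f * y f.

(* (x,x) is a symmetric Nash equilibrium of the matroid game with loss L
   (row player minimizes x^T L y, column player maximizes it). *)
Definition sym_nash (R : realFieldType) (E : finType) (indep : {set {set E}})
    (L : E -> E -> R) (x : E -> R) : Prop :=
  in_base_polytope indep x /\
  forall z, in_base_polytope indep z ->
    bilin L x z <= bilin L x x /\ bilin L x x <= bilin L z x.

Fixpoint lex_le (R : realFieldType) (s t : seq R) : bool :=
  match s, t with
  | [::], _ => true
  | _ :: _, [::] => false
  | a :: s', b :: t' => (a < b) || ((a == b) && lex_le s' t')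
  end.

Definition sorted_ratios (R : realFieldType) (E : finType) (w x : E -> R)
    : seq R :=
  sort <=%R [seq x e / w e | e <- enum E].

Definition lex_optimal (R : realFieldType) (E : finType)
    (indep : {set {set E}}) (w x : E -> R) : Prop :=
  in_base_polytope indep x /\
  forall y, in_base_polytope indep y ->
    lex_le (sorted_ratios w y) (sorted_ratios w x).

(* Main.v *)
Require Import Defs.
From HB Require Import structures.
From mathcomp Require Import all_boot all_order all_algebra.
From Stdlib Require Import FunctionalExtensionality.
From mathcomp Require Import ring lra.
Set Implicit Arguments. Unset Strict Implicit. Unset Printing Implicit Defensive.
Import Order.TTheory GRing.Theory Num.Theory.
Local Open Scope ring_scope.

Lemma lex_le_refl (R : realFieldType) (s : seq R) : lex_le s s.
Proof. by elim: s => //= a s ->; rewrite eqxx ltxx. Qed.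

Lemma lex_count (R : realFieldType) (v : R) (s t : seq R) :
  sorted <=%R s -> sorted <=%R t -> size s = size t ->
  (forall u : R, u < v -> (count (pred1 u) t <= count (pred1 u) s)%N) ->
  (count (fun u => (u < v)%R) t < count (fun u => (u < v)%R) s)%N ->
  lex_le s t && ~~ lex_le t s.
Proof.
elim: s t => [|a s IH] [|b t] //.
move=> Ss St [Hsz] Hc Hlt.
have Sa : all (fun u => a <= u) s := order_path_min le_trans Ss.
case: (ltgtP a b) => [ab|ba|eab].
- by rewrite /= ab (lt_gtF ab) (gt_eqF ab).
- exfalso.
  have Hall : forall u, u \in a :: s -> b < u.
    move=> u; rewrite inE => /orP [/eqP -> // | us].
    exact: lt_le_trans ba (allP Sa u us).
  case: (ltP b v) => [bv|vb].
  + have := Hc b bv.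
    have -> : count (pred1 b) (a :: s) = 0%N.
      apply/eqP; rewrite -leqn0 leqNgt -has_count; apply/hasPn => u /Hall bu /=.
      by rewrite (gt_eqF bu).
    by rewrite /= eqxx.
  + move: Hlt.
    have -> : count (fun u => (u < v)%R) (a :: s) = 0%N.
      apply/eqP; rewrite -leqn0 leqNgt -has_count; apply/hasPn => u /Hall bu /=.
      by rewrite -leNgt (le_trans vb (ltW bu)).
    by rewrite ltn0.
- subst b; rewrite /= ltxx eqxx /=.
  apply: IH => //.
  + exact: path_sorted Ss.
  + exact: path_sorted St.
  + by move=> u uv; have := Hc u uv; rewrite /= leq_add2l.
  + by move: Hlt; rewrite /= ltn_add2l.
Qed.

Lemma count_lt (T : eqType) (P Q : pred T) (r : seq T) :
  subpred P Q -> (exists2 e, e \in r & Q e && ~~ P e) ->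
  (count P r < count Q r)%N.
Proof.
move=> PQ; elim: r => [[e]//|a r IH [e]]; rewrite inE => /orP [/eqP -> | er] /andP [qe npe] /=.
- by rewrite qe (negbTE npe) add0n add1n ltnS sub_count.
- have h : (P a <= Q a)%N by case: (boolP (P a)) => // /PQ ->.
  have := IH (ex_intro2 _ _ e er (introT andP (conj qe npe))).
  rewrite -(ltn_add2l (P a)) => /leq_trans; apply; by rewrite leq_add2r.
Qed.

Lemma exists_min (R : realFieldType) (E : finType) (A : {set E}) (c : E -> R) e0 :
  e0 \in A -> exists2 e1, e1 \in A & forall e, e \in A -> c e1 <= c e.
Proof.
move=> He0; case: (arg_minP c He0) => e1 He1 Hmin.
by exists e1.
Qed.
Lemma abel (R : realFieldType) (E : finType) (n : nat) :
  forall (A : {set E}) (c D : E -> R),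
  (#|A| <= n)%N -> (forall e, e \in A -> 0 <= c e) ->
  (forall t, 0 <= t -> 0 <= \sum_(e in A | t < c e) D e) ->
  0 <= \sum_(e in A) c e * D e /\
  (\sum_(e in A) c e * D e = 0 ->
     forall t, 0 <= t -> \sum_(e in A | t < c e) D e = 0).
Proof.
elim: n => [|n IH] A c D HA Hc Hd.
  have -> : A = set0 by apply/eqP; rewrite -cards_eq0 -leqn0.
  rewrite big_set0; split => // _ t _.
  by rewrite big_pred0 // => e; rewrite inE.
case: (set_0Vmem A) => [-> | [e0 He0]].
  rewrite big_set0; split => // _ t _.
  by rewrite big_pred0 // => e; rewrite inE.
have [e1 He1 Hmin] := exists_min c He0.
set m := c e1.
have m0 : 0 <= m := Hc e1 He1.
set A' := [set e in A | m < c e].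
have HA' : (#|A'| <= n)%N.
  have : A' \proper A.
    apply/properP; split; first by apply/subsetP => e; rewrite inE => /andP [].
    by exists e1 => //; rewrite inE ltxx andbF.
  by move/proper_card => h; rewrite -ltnS (leq_trans h HA).
have Hc' : forall e, e \in A' -> 0 <= c e - m.
  by move=> e; rewrite inE subr_ge0 => /andP [_ /ltW].
have Hd' : forall t, 0 <= t -> 0 <= \sum_(e in A' | t < c e - m) D e.
  move=> t t0.
  rewrite (eq_bigl (fun e => (e \in A) && (m + t < c e))); first by apply: Hd; rewrite addr_ge0.
  move=> e; rewrite inE ltrBrDl -andbA; case: (e \in A) => //=.
  apply/idP/idP => [/andP [] // | h]; apply/andP; split => //.
  by apply: le_lt_trans h; rewrite lerDl.
have [IH1 IH2] := IH A' (fun e => c e - m) D HA' Hc' Hd'.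
set S := \sum_(e in A) D e.
set T := \sum_(e in A') (c e - m) * D e.
have T_eq : T = \sum_(e in A) (c e - m) * D e.
  rewrite [X in _ = X](bigID (fun e => m < c e)) /=.
  rewrite [X in _ = _ + X]big1 ?addr0; last first.
    move=> e /andP [eA h].
    have -> : c e = m by apply/eqP; rewrite eq_le (Hmin e eA) andbT leNgt.
    by rewrite subrr mul0r.
  by apply: eq_bigl => e; rewrite inE.
have decomp : \sum_(e in A) c e * D e = m * S + T.
  rewrite T_eq /S mulr_sumr -big_split /=.
  by apply: eq_bigr => e _; rewrite -mulrDl addrC subrK.
have Sall : forall t, t < m -> \sum_(e in A | t < c e) D e = S.
  move=> t tm; apply: eq_bigl => e; case eA: (e \in A) => //=.
  exact: lt_le_trans tm (Hmin e eA).
have mS : 0 <= m * S.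
  case: (eqVneq m 0) => [-> | mn0]; first by rewrite mul0r.
  have mpos : 0 < m by rewrite lt_def mn0 m0.
  by rewrite mulr_ge0 // -(Sall 0 mpos); apply: Hd.
rewrite decomp; split; first by rewrite addr_ge0.
move/eqP; rewrite paddr_eq0 // => /andP [/eqP mS0 /eqP T0] t t0.
case: (ltP t m) => [tm | mt].
  rewrite Sall //; move/eqP: mS0; rewrite mulf_eq0 => /orP [/eqP m00 | /eqP //].
  by move: tm; rewrite m00 ltNge t0.
transitivity (\sum_(e in A' | t - m < c e - m) D e); last first.
  by apply: IH2 => //; rewrite subr_ge0.
apply: eq_bigl => e; rewrite inE ltrD2r -andbA; case: (e \in A) => //=.
apply/idP/idP => [h | /andP [] //]; apply/andP; split => //.
exact: le_lt_trans mt h.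
Qed.
Fixpoint greedy (E : finType) (indep : {set {set E}}) (s : seq E) (J : {set E})
  : {set E} :=
  if s is e :: s' then greedy indep s' (if e |: J \in indep then e |: J else J)
  else J.

Lemma greedy_spec (R : realFieldType) (E : finType) (indep : {set {set E}})
  (c : E -> R) (s : seq E) (J : {set E}) :
  is_matroid indep -> J \in indep -> sorted (fun a b => c b <= c a) s ->
  (forall f e, f \in J -> e \in s -> c e <= c f) ->
  [/\ greedy indep s J \in indep, J \subset greedy indep s J &
   forall e, e \in s -> e \notin greedy indep s J ->
     e |: (greedy indep s J :&: [set f | c e <= c f]) \notin indep].
Proof.
move=> Hm; have [H0 Hsub Haug] := Hm.
elim: s J => [|e s IH] J HJ Ss HJs /=; first by split.
set J1 := if e |: J \in indep then e |: J else J.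
have HJ1 : J1 \in indep by rewrite /J1; case: ifP.
have Ss' := path_sorted Ss.
have Hes : all (fun b => c b <= c e) s.
  apply: order_path_min Ss => y x z h1 h2; exact: le_trans h2 h1.
have HJJ1 : J \subset J1 by rewrite /J1; case: ifP => // _; apply: subsetUr.
have HJ1s : forall f e', f \in J1 -> e' \in s -> c e' <= c f.
  move=> f e' fJ1 e's; have : f \in e |: J.
    by move: fJ1; rewrite /J1; case: ifP => // _ fJ; rewrite in_setU1 fJ orbT.
  rewrite in_setU1 => /orP [/eqP -> | fJ]; first exact: (allP Hes).
  by apply: HJs => //; rewrite inE e's orbT.
have [K1 K2 K3] := IH J1 HJ1 Ss' HJ1s.
split => //; first exact: subset_trans HJJ1 K2.
move=> f; rewrite inE => /orP [/eqP -> | fs]; last exact: K3.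
move=> eK; apply/negP => Hin.
have eJ1 : e \notin J1 by apply: contra eK => h; apply: (subsetP K2).
have nJ : e |: J \notin indep.
  by move: eJ1; rewrite /J1; case: ifP => // _; rewrite setU11.
move/negP: nJ; apply; apply: (Hsub _ _ Hin).
apply: setUS; apply/subsetP => g gJ; rewrite inE (subsetP (subset_trans HJJ1 K2) g gJ) inE /=.
by apply: HJs => //; rewrite inE eqxx.
Qed.

Definition greedyJ (R : realFieldType) (E : finType) (indep : {set {set E}})
  (c : E -> R) := greedy indep (sort (fun a b => c b <= c a) (enum E)) set0.

Lemma greedyJ_spec (R : realFieldType) (E : finType) (indep : {set {set E}})
  (c : E -> R) : is_matroid indep ->
  greedyJ indep c \in indep /\
  forall U : {set E}, (forall e f, e \in U -> c e <= c f -> f \in U) ->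
    #|greedyJ indep c :&: U| = mrank indep U.
Proof.
move=> Hm; have [H0 Hsub Haug] := Hm.
have tot : total (fun a b : E => c b <= c a) by move=> a b; apply: le_total.
have [K1 _ K3] := greedy_spec Hm H0 (sort_sorted tot (enum E))
  (fun f e (h : f \in set0) _ => ltac:(by rewrite inE in h)).
split => // U HU.
rewrite /greedyJ; set J := greedy _ _ _ in K1 K3 *.
have JU : J :&: U \in indep by apply: (Hsub _ J) => //; apply: subsetIl.
apply/eqP; rewrite eqn_leq; apply/andP; split.
  by apply: (@leq_bigmax_cond _ (fun I => (I \in indep) && (I \subset U)) (fun I => #|I|)); rewrite JU subsetIr.
apply/bigmax_leqP => I /andP [HI IU]; rewrite leqNgt; apply/negP => lt.
have [e eI He] := Haug _ _ JU HI lt.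
move: eI; rewrite inE => /andP [eJU eI].
have eU : e \in U := subsetP IU e eI.
have eJ : e \notin J by move: eJU; rewrite inE eU andbT.
have := K3 e; rewrite mem_sort mem_enum => /(_ isT eJ) /negP; apply.
apply: (Hsub _ _ He); apply: setUS; apply: setIS; apply/subsetP => f.
by rewrite inE; apply: HU.
Qed.

Lemma split3 (R : realFieldType) (E : finType) (c F : E -> R) (v : R) :
  \sum_e F e = \sum_(e | c e < v) F e + \sum_(e | c e == v) F e
               + \sum_(e | v < c e) F e.
Proof.
rewrite (bigID (fun e => c e < v)) /= -addrA; congr (_ + _).
rewrite (bigID (fun e => c e == v)) /=; congr (_ + _); apply: eq_bigl => e;
  by case: (ltgtP (c e) v).
Qed.

Theorem corollary14 (R : realFieldType) (E : finType) (indep : {set {set E}})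
    (L : E -> E -> R) (x : E -> R) :
  is_matroid indep ->
  (forall e f, e != f -> L e f = 0) ->
  (forall e, 0 < L e e) ->
  sym_nash indep L x ->
  lex_optimal indep (fun e => (L e e)^-1) x /\
  (forall y, lex_optimal indep (fun e => (L e e)^-1) y -> y = x).
Proof.
move=> Hm HL Hpos [HB Hnash].
have [H0 Hsub Haug] := Hm.
pose c := fun e => x e * L e e.
have bil : forall u v, bilin L u v = \sum_e u e * L e e * v e.
  move=> u v; rewrite /bilin; apply: eq_bigr => e _.
  rewrite (bigD1 e) //= big1 ?addr0 // => f fe.
  by rewrite HL ?mulr0 ?mul0r // eq_sym.
have [Bx0 BxS BxE] := HB.
have c0 : forall e, 0 <= c e by move=> e; rewrite /c mulr_ge0 // ltW.
have Hc : forall z, in_base_polytope indep z ->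
    \sum_e c e * z e = \sum_e c e * x e.
  move=> z Bz; have [h1 h2] := Hnash z Bz; move: h1 h2; rewrite !bil.
  have e2 : \sum_e z e * L e e * x e = \sum_e c e * z e.
    by apply: eq_bigr => e _; rewrite /c; ring.
  rewrite e2 => h1 h2; apply/eqP; rewrite eq_le; apply/andP; split => //.
have sumT : forall F : E -> R, \sum_(e in [set: E]) F e = \sum_e F e.
  by move=> F; apply: eq_bigl => e; rewrite inE.
have sumU : forall (F : E -> R) t,
    \sum_(e in [set: E] | t < c e) F e = \sum_(e in [set e | t < c e]) F e.
  by move=> F t; apply: eq_bigl => e; rewrite !inE.
have [HJ HJr] := greedyJ_spec c Hm.
set J := greedyJ indep c in HJ HJr.
pose z := fun e => ((e \in J) : nat)%:R : R.
have sumz : forall S : {set E}, \sum_(e in S) z e = #|J :&: S|%:R.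
  move=> S; rewrite /z -natr_sum; congr (_%:R).
  rewrite -sum1_card big_mkcond [RHS]big_mkcond /=.
  by apply: eq_bigr => e _; rewrite inE; case: (e \in S); case: (e \in J).
have upU : forall t (e f : E), e \in [set e | t < c e] -> c e <= c f ->
    f \in [set e | t < c e].
  by move=> t e f; rewrite !inE => h1 h2; apply: lt_le_trans h2.
have Bz : in_base_polytope indep z.
  split.
  - by move=> e; rewrite /z ler0n.
  - move=> S; rewrite sumz ler_nat.
    apply: (@leq_bigmax_cond _ (fun I => (I \in indep) && (I \subset S))
      (fun I => #|I|)); rewrite subsetIr andbT.
    by apply: (Hsub _ J) => //; apply: subsetIl.
  - by rewrite sumz HJr.
have step : forall a b : E -> R,
    (forall t, 0 <= t -> \sum_(e in [set e | t < c e]) a e <=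
                          \sum_(e in [set e | t < c e]) b e) ->
    \sum_e c e * a e = \sum_e c e * b e ->
    forall t, 0 <= t -> \sum_(e in [set e | t < c e]) a e =
                         \sum_(e in [set e | t < c e]) b e.
  move=> a b hab heq t t0.
  have [_ h] := abel (n := #|[set: E]|) (A := [set: E]) (D := fun e => b e - a e)
    (leqnn _) (fun e _ => c0 e)
    (fun t t0 => ltac:(by rewrite sumU sumrB subr_ge0; apply: hab)).
  apply/eqP; rewrite eq_sym -subr_eq0; apply/eqP.
  rewrite -sumrB -sumU; apply: h => //.
  rewrite sumT; under eq_bigr do rewrite mulrBr.
  by rewrite sumrB heq subrr.
have tight : forall t, 0 <= t ->
    \sum_(e in [set e | t < c e]) x e = (mrank indep [set e | t < c e])%:R.
  move=> t t0; rewrite -HJr; last exact: upU.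
  rewrite -sumz; apply: step => // [s s0|]; first by rewrite sumz HJr; [apply: BxS | exact: upU].
  by rewrite (Hc z Bz).
have step2 : forall y, in_base_polytope indep y -> forall t, 0 <= t ->
    \sum_(e in [set e | t < c e]) y e = \sum_(e in [set e | t < c e]) x e.
  move=> y By; apply: step => [s s0|]; last exact: Hc.
  by rewrite tight //; have [_ h _] := By; apply: h.
have key : forall y, in_base_polytope indep y ->
  (forall e, y e = x e) \/
  (lex_le (sorted_ratios (fun e => (L e e)^-1) y)
          (sorted_ratios (fun e => (L e e)^-1) x) &&
   ~~ lex_le (sorted_ratios (fun e => (L e e)^-1) x)
             (sorted_ratios (fun e => (L e e)^-1) y)).
  move=> y By.
  case: (boolP [forall e, y e == x e]) => [/forallP h | ].
    by left => e; apply/eqP.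
  rewrite negb_forall => /existsP [e0 ne0]; right.
  have [e1 He1 Hmin] := @exists_min _ _ [set e | y e != x e] c e0
    ltac:(by rewrite inE).
  pose v := c e1.
  have Hlow : forall e, c e < v -> y e = x e.
    move=> e; apply: contraTeq => ne; rewrite -leNgt; apply: Hmin.
    by rewrite inE.
  have Hy2 := step2 y By v (c0 e1).
  have tot : \sum_e y e = \sum_e x e.
    have [_ _ ByE] := By; by rewrite -!sumT ByE BxE.
  have Vsum : \sum_(e | c e == v) (y e - x e) = 0.
    rewrite sumrB; move: tot; rewrite (split3 c y v) (split3 c x v).
    have -> : \sum_(e | c e < v) y e = \sum_(e | c e < v) x e.
      by apply: eq_bigr => e h; apply: Hlow.
    have h1 : forall F : E -> R, \sum_(e | v < c e) F e =
        \sum_(e in [set e | v < c e]) F e.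
      by move=> F; apply: eq_bigl => e; rewrite inE.
    rewrite !h1 Hy2 => h; lra.
  have [e2 Ve2 lt2] : exists2 e2, c e2 == v & y e2 / (L e2 e2)^-1 < v.
    case: (boolP [exists e, (c e == v) && (y e / (L e e)^-1 < v)]).
      by move=> /existsP [e /andP [h1 h2]]; exists e.
    rewrite negb_exists => /forallP hn; exfalso.
    have ge : forall e, c e == v -> 0 <= y e - x e.
      move=> e ev; have := hn e; rewrite ev /= -leNgt invrK => h.
      rewrite subr_ge0 -(ler_pM2r (Hpos e)).
      by move/eqP: ev => ev; rewrite -/(c e) ev.
    have := psumr_eq0P ge Vsum (i := e1) (eqxx _).
    move/eqP; rewrite subr_eq0 => /eqP h.
    by move: He1; rewrite inE h eqxx.
  apply: (lex_count (v := v)).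
  - exact: sort_sorted le_total _.
  - exact: sort_sorted le_total _.
  - by rewrite /sorted_ratios !size_sort !size_map.
  - move=> u uv; rewrite /sorted_ratios !count_sort !count_map.
    apply: sub_count => e /=; rewrite !invrK => /eqP ex.
    rewrite Hlow ?ex //; by rewrite /c ex.
  - rewrite /sorted_ratios !count_sort !count_map.
    apply: count_lt.
      by move=> e /=; rewrite !invrK => h; rewrite Hlow.
    exists e2; first by rewrite -enumT mem_enum.
    by rewrite /= lt2 /= invrK -/(c e2) (eqP Ve2) ltxx.
split.
  split => // y By; case: (key y By) => [h | /andP [h _] //].
  have -> : y = x by apply: functional_extensionality.
  exact: lex_le_refl.
move=> y [By Hopt]; case: (key y By) => [h | /andP [_ h]].
  by apply: functional_extensionality.
by move: (Hopt x HB); rewrite (negbTE h).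
Qed.
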